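(* For every graph $G$ and every positive integer $t$, $\partial\Gamma(G)\ge t$ if and only if $G$ contains an induced subgraph which is a minimal pG-$t$-atom.
   Context: A proper $k$-coloring of $G$ is a surjective map $c:V(G)\to\{1,\ldots,k\}$ with $c(u)\ne c(v)$ for every edge $uv$. A vertex of color $i$ is a Grundy vertex if it has, for every $j<i$, a neighbor of color $j$. A partial Grundy $k$-coloring is a proper $k$-coloring in which every color class contains at least one Grundy vertex; $\partial\Gamma(G)$ is the largest $k$ such that $G$ has a partial Grundy $k$-coloring. A pG-$t$-atom is a graph $A$ whose vertex set can be partitioned into $t$ sets $D_1,\ldots,D_t$, where each $D_i$ contains a special vertex $c_i$, such that: each $D_i$ is an independent set with $|D_i|\le t-i+1$; and for all $i\in\{2,\ldots,t\}$, $c_i$ has a neighbor in each of $D_1,\ldots,D_{i-1}$. A pG-$t$-atom is minimal if no proper induced subgraph of it is a pG-$t$-atom. *)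

(* Defs.v *)
(* A finite simple graph is a symmetric irreflexive relation
   e : rel T on a finType T. Colors {1..k} are represented by 'I_k
   (color i+1 of the paper is the ordinal i). *)
From HB Require Import structures.
From mathcomp Require Import all_boot.
Set Implicit Arguments. Unset Strict Implicit. Unset Printing Implicit Defensive.

Section Defs.
Variables (T : finType) (e : rel T).

Definition proper_coloring (k : nat) (c : T -> 'I_k) : bool :=
  [forall i : 'I_k, exists v, c v == i] &&
  [forall u, forall v, e u v ==> (c u != c v)].

Definition grundy_vertex (k : nat) (c : T -> 'I_k) (v : T) : bool :=
  [forall j : 'I_k, (j < c v) ==> [exists u, e v u && (c u == j)]].

Definition partial_grundy_coloring (k : nat) (c : T -> 'I_k) : bool :=
  proper_coloring c &&
  [forall i : 'I_k, exists v, (c v == i) && grundy_vertex c v].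

Definition has_pG_coloring (k : nat) : bool :=
  [exists c : {ffun T -> 'I_k}, partial_grundy_coloring c].

(* the partial Grundy number: largest k admitting a partial Grundy k-coloring
   (any such k is at most #|T| by surjectivity) *)
Definition partial_grundy_number : nat :=
  \max_(k < #|T|.+1 | has_pG_coloring k) k.

(* The induced subgraph G[S] is a pG-t-atom. Classes are indexed 0..t-1,
   class i (0-based) = D_{i+1}; bound |D_{i+1}| <= t-(i+1)+1 = t - i. *)
Definition pG_atom (t : nat) (S : {set T}) : Prop :=
  exists (d : T -> 'I_t) (cs : 'I_t -> T),
    [/\ (forall i, cs i \in S /\ d (cs i) = i),
        (forall x y, x \in S -> y \in S -> d x = d y -> ~~ e x y),
        (forall i : 'I_t, #|[set x in S | d x == i]| <= t - i) &
        (forall i j : 'I_t, j < i ->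
           exists y, [/\ y \in S, d y = j & e (cs i) y])].

Definition minimal_pG_atom (t : nat) (S : {set T}) : Prop :=
  pG_atom t S /\ (forall S' : {set T}, S' \proper S -> ~ pG_atom t S').

End Defs.

(* Main.v *)
Require Import Defs.
From HB Require Import structures.
From mathcomp Require Import all_boot zify.
From Stdlib Require Import Classical.
Set Implicit Arguments. Unset Strict Implicit. Unset Printing Implicit Defensive.

Lemma pg_card (T : finType) (e : rel T) k : has_pG_coloring e k -> k <= #|T|.
Proof.
case/existsP=> c /andP[/andP[/forallP sur _] _].
have f : forall i : 'I_k, {v : T | c v == i}.
  move=> i; exact: (sigW (existsP (sur i))).
have inj : injective (fun i => sval (f i)).
  move=> i j /= h; move: (svalP (f i)) (svalP (f j)); rewrite h => /eqP -> /eqP //.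
by rewrite -(card_ord k) -(card_imset _ inj) max_card.
Qed.
Lemma min_atom (T : finType) (e : rel T) t S :
  pG_atom e t S -> exists S', minimal_pG_atom e t S'.
Proof.
move: {2}#|S| (leqnn #|S|) => n; elim: n S => [|n IH] S hS hA.
  exists S; split=> // S' /proper_card; lia.
case: (classic (exists S' : {set T}, S' \proper S /\ pG_atom e t S')).
  case=> S' [hp hA']; apply: (IH S') => //; move: (proper_card hp); lia.
move=> hn; exists S; split=> // S' hp hA'; apply: hn; by exists S'.
Qed.
Lemma card_gt (t : nat) (j : 'I_t) : #|[set i : 'I_t | j < i]| <= t - j.+1.
Proof.
rewrite cardE.
have -> : t - j.+1 = size (iota j.+1 (t - j.+1)) by rewrite size_iota.
rewrite -(size_map val).
apply: uniq_leq_size; first by rewrite map_inj_uniq ?enum_uniq //; exact: val_inj.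
move=> x /mapP[i]; rewrite mem_enum inE => hi ->.
case: i hi => i0 hi0 /= hji; rewrite mem_iota; move: (ltn_ord j); lia.
Qed.

Lemma fwd (T : finType) (e : rel T) n k (c : T -> 'I_k) :
  n.+1 <= k -> partial_grundy_coloring e c -> exists S, pG_atom e n.+1 S.
Proof.
move=> hk /andP[/andP[_ /forallP prop] /forallP gr].
pose w (i : 'I_n.+1) : 'I_k := widen_ord hk i.
have hcs : forall i : 'I_n.+1, {v | (c v == w i) && grundy_vertex e c v}.
  move=> i; exact: (sigW (existsP (gr (w i)))).
pose cs i := sval (hcs i).
have csc : forall i, c (cs i) = w i.
  by move=> i; case/andP: (svalP (hcs i)) => /eqP.
have csg : forall i, grundy_vertex e c (cs i).
  by move=> i; case/andP: (svalP (hcs i)).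
pose nb (i j : 'I_n.+1) := odflt (cs i) [pick y | e (cs i) y && (c y == w j)].
have nbP : forall i j : 'I_n.+1, j < i -> e (cs i) (nb i j) /\ c (nb i j) = w j.
  move=> i j hji; rewrite /nb; case: pickP => [y /andP[h1 /eqP h2] //|].
  move=> H; move/forallP: (csg i) => /(_ (w j)); rewrite csc /= hji /=.
  by case/existsP=> y hy; move: (H y); rewrite hy.
pose S := [set cs i | i : 'I_n.+1] :|: [set nb p.1 p.2 | p in [set p : 'I_n.+1 * 'I_n.+1 | p.2 < p.1]].
pose d (x : T) : 'I_n.+1 := inord (c x).
have Sc : forall x, x \in S -> exists j : 'I_n.+1, c x = w j /\ (x = cs j \/ exists i : 'I_n.+1, j < i /\ x = nb i j).
  move=> x; rewrite inE => /orP[/imsetP[i _ ->]|/imsetP[[i j]]].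
    by exists i; split; [exact: csc | left].
  rewrite inE /= => hji ->; exists j; split; first by case: (nbP _ _ hji).
  by right; exists i.
have dw : forall j, d (cs j) = j /\ forall x, c x = w j -> d x = j.
  have H : forall x j, c x = w j -> d x = j.
    by move=> x j h; apply: val_inj; rewrite /d h /= inordK.
  move=> j; split; [exact (H _ _ (csc j)) | move=> x; exact (H x j)].
exists S, d, cs; split.
- move=> i; split; first by rewrite inE; apply/orP; left; apply/imsetP; exists i.
  by case: (dw i).
- move=> x y /Sc[i [hx _]] /Sc[j [hy _]].
  rewrite (proj2 (dw i) _ hx) (proj2 (dw j) _ hy) => hij.
  move/forallP: (prop x) => /(_ y); rewrite hx hy hij eqxx implybF //.
- move=> j.
  apply: (@leq_trans #|cs j |: [set nb i j | i in [set i : 'I_n.+1 | j < i]]|).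
    apply: subset_leq_card; apply/subsetP=> x; rewrite inE => /andP[/Sc[i [hx hh]] /eqP hd].
    have ij : i = j by rewrite -hd; rewrite (proj2 (dw i) _ hx).
    subst i; case: hh => [->|[i [hji ->]]]; rewrite !inE ?eqxx //.
    apply/orP; right; apply/imsetP; exists i => //; by rewrite inE.
  apply: (leq_trans (leq_card_setU _ _)); rewrite cards1.
  apply: (@leq_trans (1 + #|[set i : 'I_n.+1 | j < i]|)).
    by rewrite leq_add2l leq_imset_card.
  move: (card_gt j) (ltn_ord j); lia.
- move=> i j hji; exists (nb i j); case: (nbP _ _ hji) => h1 h2; split => //.
    rewrite inE; apply/orP; right; apply/imsetP; exists (i, j) => //; by rewrite inE.
  exact: (proj2 (dw j)).
Qed.
Lemma bwd (T : finType) (e : rel T) (e_sym : symmetric e) (e_irr : irreflexive e) n S :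
  pG_atom e n.+1 S -> exists K, n.+1 <= K /\ has_pG_coloring e K.
Proof.
case=> d [cs [hcs hind _ hnb]].
pose N := (n + #|T|).+1.
pose P (c : {ffun T -> 'I_N}) :=
  [forall u, forall v, e u v ==> (c u != c v)] && [forall v in S, val (c v) == val (d v)].
pose c0 : {ffun T -> 'I_N} :=
  [ffun v => if v \in S then inord (d v) else inord (n.+1 + index v (enum T))].
have c0v : forall v, val (c0 v) = if v \in S then val (d v) else n.+1 + index v (enum T).
  move=> v; rewrite ffunE; case: ifP => _ /=; rewrite inordK //.
    move: (ltn_ord (d v)); rewrite /N; lia.
  have h : index v (enum T) < #|T| by rewrite cardE index_mem mem_enum.
  by move: h; rewrite /N addSn ltnS ltn_add2l.
have P0 : P c0.
  apply/andP; split; last by apply/forallP=> v; apply/implyP=> hv; rewrite c0v hv.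
  apply/forallP=> u; apply/forallP=> v; apply/implyP=> huv.
  apply/negP=> /eqP /(congr1 val); rewrite !c0v /=.
  case: ifP => hu; case: ifP => hv.
  - move=> h; have hd : d u = d v by apply: val_inj.
    by move: (hind u v hu hv hd); rewrite huv.
  - move: (ltn_ord (d u)); lia.
  - move: (ltn_ord (d v)); lia.
  - move=> h; have hi : index u (enum T) = index v (enum T) by move: h; rewrite addSn => /eqP; rewrite eqSS eqn_add2l => /eqP.
    have huv' : u = v.
      by rewrite -(nth_index u (mem_enum T u)) hi nth_index ?mem_enum.
    by move: huv; rewrite huv' e_irr.
case: (arg_minnP (fun c : {ffun T -> 'I_N} => \sum_v val (c v)) P0) => c Pc cmin.
case/andP: Pc => /forallP cprop /forallP cS.
pose col v := nat_of_ord (c v).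
have colS : forall v, v \in S -> col v = d v.
  by move=> v hv; move: (cS v); rewrite hv => /eqP.
have colP : forall u v, e u v -> col u != col v.
  move=> u v huv; move/forallP: (cprop u) => /(_ v); rewrite huv /=.
  by apply: contra => /eqP h; apply/eqP; apply: val_inj.
have gr : forall v, v \notin S -> forall j, j < col v -> exists u, e v u /\ col u = j.
  move=> v hv j hj.
  case: (boolP [exists u, e v u && (col u == j)]).
    by case/existsP=> u /andP[h1 /eqP h2]; exists u.
  move=> hne; exfalso.
  pose c' : {ffun T -> 'I_N} := [ffun x => if x == v then inord j else c x].
  have c'v : forall x, val (c' x) = if x == v then j else col x.
    move=> x; rewrite ffunE; case: ifP => // _ /=; rewrite inordK //.
    move: (ltn_ord (c v)) hj; rewrite /col /N /=; lia.
  have Pc' : P c'.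
    apply/andP; split.
      apply/forallP=> x; apply/forallP=> y; apply/implyP=> hxy.
      apply/negP=> /eqP /(congr1 val); rewrite !c'v.
      case: (eqVneq x v) => [hx|hx]; case: (eqVneq y v) => [hy|hy].
      - by move: hxy; rewrite hx hy e_irr.
      - move=> h; move/negP: hne; apply; apply/existsP; exists y.
        by rewrite -hx hxy h eqxx.
      - move=> h; move/negP: hne; apply; apply/existsP; exists x.
        by rewrite -hy e_sym hxy -h eqxx.
      - by move/eqP; apply/negP; apply: colP.
    apply/forallP=> x; apply/implyP=> hx; rewrite c'v.
    case: (eqVneq x v) => [hxv|_]; first by move: hv; rewrite -hxv hx.
    by rewrite colS.
  move: (cmin _ Pc').
  rewrite (bigD1 v) //= [X in _ <= X](bigD1 v) //= c'v eqxx.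
  have -> : \sum_(i | i != v) val (c' i) = \sum_(i | i != v) val (c i).
    by apply: eq_bigr => i hi; rewrite c'v (negbTE hi).
  rewrite -/(col v) /=; move: hj; rewrite /col /=; lia.
have outS : forall v, n.+1 <= col v -> v \notin S.
  move=> v h; apply/negP=> hv; move: h; rewrite colS //; move: (ltn_ord (d v)); lia.
have T0 : 0 < #|T| by apply/card_gt0P; exists (cs ord0).
case: (eq_bigmax col T0) => w hw.
set m := \max_v col v in hw.
have colm : forall v, col v <= m by move=> v; exact: leq_bigmax.
have surj : forall i, i <= m -> exists v, col v = i.
  move=> i hi.
  case: (ltnP i n.+1) => hin.
    exists (cs (inord i)); rewrite colS; last by case: (hcs (inord i)).
    by case: (hcs (inord i)) => _ ->; rewrite inordK.
  have hwS : w \notin S by apply: outS; rewrite -hw; lia.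
  case: (ltnP i (col w)) => h.
    by case: (gr w hwS i h) => u [_ ?]; exists u.
  by exists w; rewrite -hw; rewrite hw in hi; lia.
pose f : {ffun T -> 'I_m.+1} := [ffun v => inord (col v)].
have fv : forall v, nat_of_ord (f v) = col v by move=> v; rewrite ffunE /= inordK ?ltnS.
exists m.+1; split.
  have := colm (cs ord_max); rewrite colS; last by case: (hcs ord_max).
  by case: (hcs ord_max) => _ ->.
apply/existsP; exists f; apply/andP; split; first (apply/andP; split).
- apply/forallP=> i; case: (surj i) => [|v hv]; first by rewrite -ltnS.
  by apply/existsP; exists v; apply/eqP; apply: val_inj => /=; rewrite fv.
- apply/forallP=> u; apply/forallP=> v; apply/implyP=> huv.
  apply/negP=> /eqP /(congr1 val); rewrite /= !fv; apply/eqP; exact: colP.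
apply/forallP=> i.
case: (ltnP i n.+1) => hin.
  have [hcsS hd] := hcs (inord i).
  apply/existsP; exists (cs (inord i)).
  have hci : col (cs (inord i)) = i by rewrite colS // hd inordK.
  apply/andP; split; first by apply/eqP; apply: val_inj => /=; rewrite fv.
  apply/forallP=> j; apply/implyP; rewrite fv hci => hj.
  have hj' : (inord j : 'I_n.+1) < (inord i : 'I_n.+1).
    by rewrite !inordK //; lia.
  case: (hnb _ _ hj') => y [hyS hdy hey].
  apply/existsP; exists y; rewrite hey /=; apply/eqP; apply: val_inj.
  rewrite /= fv colS // hdy inordK //; lia.
case: (surj i) => [|v hv]; first by rewrite -ltnS.
have hvS : v \notin S by apply: outS; rewrite hv.
apply/existsP; exists v; apply/andP; split; first by apply/eqP; apply: val_inj => /=; rewrite fv.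
apply/forallP=> j; apply/implyP; rewrite fv => hj.
case: (gr v hvS j hj) => u [hu hcu].
by apply/existsP; exists u; rewrite hu /=; apply/eqP; apply: val_inj => /=; rewrite fv.
Qed.

Theorem mainTheorem2 (T : finType) (e : rel T)
  (e_sym : symmetric e) (e_irr : irreflexive e) (t : nat) (t_pos : 0 < t) :
  t <= partial_grundy_number e <-> exists S : {set T}, minimal_pG_atom e t S.
Proof.
case: t t_pos => // n _; split.
- move=> h.
  case: (boolP [exists k : 'I_#|T|.+1, has_pG_coloring e k && (n < k)]); last first.
    move=> hn; exfalso; move: h; apply/negP; rewrite -ltnNge ltnS.
    apply/bigmax_leqP => k hk; rewrite -ltnS ltnNge; apply/negP => hk2.
    by move/negP: hn; apply; apply/existsP; exists k; rewrite hk hk2.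
  case/existsP=> k /andP[/existsP[c hc] hk].
  case: (fwd hk hc) => S hS; exact: min_atom hS.
- case=> S [hS _]; case: (bwd e_sym e_irr hS) => K [hK hc].
  have hKT : K < #|T|.+1 by rewrite ltnS; exact: pg_card hc.
  apply: (leq_trans hK); rewrite /partial_grundy_number.
  exact: (@leq_bigmax_cond _ _ (fun k : 'I_#|T|.+1 => nat_of_ord k) (Ordinal hKT)).
Qed.
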